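(* Let $A$ be a real $n\times n$ matrix and let $J$ be an $n\times n$ Jordan form matrix similar to $A$. Fix a step size $h>0$, parameters $\psi=\psi(h)$, $\phi=\phi(h)$, an integer $s\ge 2$ and real constants $\alpha_2,\dots,\alpha_s$, $\theta_1,\dots,\theta_s$. For a matrix $M$ consider the following three difference schemes for $\mathbf{v}'=M\mathbf{v}$: (S1) $\dfrac{\mathbf{v}_{k+1}-\psi\mathbf{v}_k}{\phi}=M\mathbf{v}_k+\sum_{m=2}^{s}\alpha_m\phi^{m-1}M^m\mathbf{v}_k$; (S2) $\dfrac{\mathbf{v}_{k+1}-\psi\mathbf{v}_k}{\phi}=M\mathbf{v}_{k+1}+\sum_{m=2}^{s}\alpha_m\phi^{m-1}M^m\mathbf{v}_{k+1}$; (S3) $\dfrac{\mathbf{v}_{k+1}-\psi\mathbf{v}_k}{\phi}=M\big[\theta_1\mathbf{v}_k+(1-\theta_1)\mathbf{v}_{k+1}\big]+\sum_{m=2}^{s}\alpha_m\phi^{m-1}M^m\big[\theta_m\mathbf{v}_k+(1-\theta_m)\mathbf{v}_{k+1}\big]$. If one of these schemes, with $M=J$, is exact for the system $\mathbf{u}'=J\mathbf{u}$, then the same scheme with the same parameters and $M=A$ is exact for the system $\mathbf{x}'=A\mathbf{x}$.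
   Context: A one-step difference scheme with step size $h>0$ for an autonomous linear system $\mathbf{x}'=M\mathbf{x}$ generates, from an initial vector $\mathbf{x}_0$, a sequence $(\mathbf{x}_k)_{k\ge 0}$ (for implicit schemes it is assumed that $\mathbf{x}_{k+1}$ is uniquely determined by $\mathbf{x}_k$). The scheme is called exact if for every initial vector $\mathbf{x}_0$ the generated sequence satisfies $\mathbf{x}_k=\mathbf{x}(kh)$ for all $k\ge 0$, where $\mathbf{x}(t)$ is the solution of $\mathbf{x}'=M\mathbf{x}$ with $\mathbf{x}(0)=\mathbf{x}_0$. In the paper $\psi(h)=1+\mathcal{O}(h^2)$, $\phi(h)=h+\mathcal{O}(h^2)$. *)

(* Defs.v *)
From HB Require Import structures.
From mathcomp Require Import all_boot all_order all_algebra.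
From mathcomp Require Import all_classical all_reals all_analysis.
From mathcomp Require Import complex.
Set Implicit Arguments. Unset Strict Implicit. Unset Printing Implicit Defensive.
Import Order.TTheory GRing.Theory Num.Theory.
Import numFieldNormedType.Exports.
Local Open Scope ring_scope.

(* J is a Jordan form matrix: a block-diagonal matrix of Jordan blocks,
   written out entrywise: zero off the diagonal and superdiagonal,
   superdiagonal entries in {0,1}, and a superdiagonal 1 only joins
   equal diagonal entries (i.e. lies inside a Jordan block). *)
Definition jordan_form (K : fieldType) (n : nat) (J : 'M[K]_n) : Prop :=
  forall i j : 'I_n,
    [/\ (j != i :> nat) -> (j != i.+1 :> nat) -> J i j = 0,
        (j = i.+1 :> nat) -> J i j = 0 \/ J i j = 1
      & (j = i.+1 :> nat) -> J i j = 1 -> J i i = J j j].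

Definition similar_RC (R : realType) (n : nat) (A : 'M[R]_n) (J : 'M[R[i]]_n)
  : Prop :=
  exists P : 'M[R[i]]_n, P \in unitmx /\ map_mx (real_complex R) A = P *m J *m invmx P.

(* The three schemes, as a relation between v_k (v) and v_(k+1) (w). *)
Inductive scheme := S1 | S2 | S3.

Definition scheme_rel (K : fieldType) (n : nat) (sc : scheme) (M : 'M[K]_n)
  (psi phi : K) (s : nat) (alpha theta : nat -> K) (v w : 'cV[K]_n) : Prop :=
  let lhs := phi^-1 *: (w - psi *: v) in
  let S (u : nat -> 'cV[K]_n) :=
      \sum_(2 <= m < s.+1) (alpha m * phi ^+ (m.-1)) *: (M ^+ m *m u m) in
  match sc with
  | S1 => lhs = M *m v + S (fun _ => v)
  | S2 => lhs = M *m w + S (fun _ => w)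
  | S3 => let mix m := theta m *: v + (1 - theta m) *: w in
          lhs = M *m mix 1%N + S mix
  end.

Definition solves_R (R : realType) (n : nat) (M : 'M[R]_n) (x0 : 'cV[R]_n)
  (x : R -> 'cV[R]_n) : Prop :=
  x 0 = x0 /\
  forall (t : R) (i : 'I_n),
    derivable (fun u => x u i 0) t 1 /\
    'D_1 (fun u => x u i 0) t = (M *m x t) i 0.

Definition solves_C (R : realType) (n : nat) (M : 'M[R[i]]_n) (x0 : 'cV[R[i]]_n)
  (x : R -> 'cV[R[i]]_n) : Prop :=
  x 0 = x0 /\
  forall (t : R) (i : 'I_n),
    derivable (fun u => complex.Re (x u i 0)) t 1 /\
    'D_1 (fun u => complex.Re (x u i 0)) t = complex.Re ((M *m x t) i 0) /\
    derivable (fun u => complex.Im (x u i 0)) t 1 /\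
    'D_1 (fun u => complex.Im (x u i 0)) t = complex.Im ((M *m x t) i 0).

Definition exact_scheme (V T : Type) (h : T) (mulnT : nat -> T -> T)
  (step : V -> V -> Prop) (solves : V -> (T -> V) -> Prop) : Prop :=
  (forall v, exists! w, step v w) /\
  forall (x0 : V) (x : T -> V) (v : nat -> V),
    solves x0 x -> v 0%N = x0 -> (forall k, step (v k) (v k.+1)) ->
    forall k, v k = x (mulnT k h).

Definition exact_R (R : realType) (n : nat) (h : R) (sc : scheme) (M : 'M[R]_n)
  (psi phi : R) (s : nat) (alpha theta : nat -> R) : Prop :=
  exact_scheme h (fun k t => t *+ k) (scheme_rel sc M psi phi s alpha theta)
    (solves_R M).

Definition exact_C (R : realType) (n : nat) (h : R) (sc : scheme) (M : 'M[R[i]]_n)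
  (psi phi : R) (s : nat) (alpha theta : nat -> R) : Prop :=
  exact_scheme h (fun k t => t *+ k)
    (scheme_rel sc M (real_complex R psi) (real_complex R phi) s
       (fun m => real_complex R (alpha m)) (fun m => real_complex R (theta m)))
    (solves_C M).

(* Main.v *)
Require Import Defs.
From HB Require Import structures.
From mathcomp Require Import all_boot all_order all_algebra.
From mathcomp Require Import all_classical all_reals all_analysis.
From mathcomp Require Import complex.
From mathcomp Require Import lra.
Import Order.TTheory GRing.Theory Num.Theory.
Import numFieldNormedType.Exports.
Local Open Scope ring_scope.

Section Transfer.
Variables (K1 K2 : fieldType) (n : nat) (f : {rmorphism K1 -> K2}).
Variables (T : 'cV[K1]_n -> 'cV[K2]_n) (M : 'M[K1]_n) (N : 'M[K2]_n).
Hypotheses (TD : forall u1 u2, T (u1 + u2) = T u1 + T u2) (T0 : T 0 = 0)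
  (TZ : forall a u, T (a *: u) = f a *: T u)
  (TM : forall u, T (M *m u) = N *m T u) (Tinj : injective T).

Lemma TX m u : T (M ^+ m *m u) = N ^+ m *m T u.
Proof.
elim: m u => [|m IH] u; first by rewrite !expr0 !mul1mx.
by rewrite !exprS -!mulmxE -!mulmxA TM IH.
Qed.

Lemma TB u1 u2 : T (u1 - u2) = T u1 - T u2.
Proof. by rewrite TD -scaleN1r TZ rmorphN1 scaleN1r. Qed.

Lemma Tsum (F : nat -> 'cV[K1]_n) a b :
  T (\sum_(a <= m < b) F m) = \sum_(a <= m < b) T (F m).
Proof. exact: (big_morph T TD T0). Qed.

Lemma rel_transfer sc psi phi s alpha theta v w :
  scheme_rel sc M psi phi s alpha theta v w <->
  scheme_rel sc N (f psi) (f phi) s (fun m => f (alpha m)) (fun m => f (theta m)) (T v) (T w).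
Proof.
have HL : T (phi^-1 *: (w - psi *: v)) = (f phi)^-1 *: (T w - f psi *: T v).
  by rewrite TZ fmorphV TB TZ.
have HS : forall u : nat -> 'cV[K1]_n,
  T (\sum_(2 <= m < s.+1) (alpha m * phi ^+ (m.-1)) *: (M ^+ m *m u m)) =
  \sum_(2 <= m < s.+1) (f (alpha m) * f phi ^+ (m.-1)) *: (N ^+ m *m T (u m)).
  move=> u; rewrite Tsum; apply: eq_bigr => m _.
  by rewrite TZ TX rmorphM rmorphXn.
case: sc => /=; split.
- by move=> E; rewrite -HL E TD TM HS.
- by rewrite -HL -TM -HS -TD => /Tinj.
- by move=> E; rewrite -HL E TD TM HS.
- by rewrite -HL -TM -HS -TD => /Tinj.
- move=> E; rewrite -HL E TD TM HS TD !TZ rmorphB rmorph1; congr (_ + _).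
  by apply: eq_bigr => m _; rewrite TD !TZ rmorphB rmorph1.
- have HH : forall m, T (theta m *: v + (1 - theta m) *: w) =
     f (theta m) *: T v + (1 - f (theta m)) *: T w.
    by move=> m; rewrite TD !TZ rmorphB rmorph1.
  rewrite -HL -HH.
  under [X in _ = _ + X]eq_bigr => m _ do rewrite -HH.
  by rewrite -TM -HS -TD => /Tinj.
Qed.
End Transfer.
Section D.
Variables (R : realType) (n : nat).
Lemma sum_derive (c : 'I_n -> R) (x : R -> 'cV[R]_n) (d : 'cV[R]_n) t :
  (forall j, derivable (fun u => x u j 0) t 1 /\ 'D_1 (fun u => x u j 0) t = d j 0) ->
  is_derive t 1 (fun u => \sum_j c j * x u j 0) (\sum_j c j * d j 0).
Proof.
move=> H.
have -> : (fun u => \sum_j c j * x u j 0) = \sum_j (c j *: (fun u => x u j 0)).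
  by apply/funext => u; rewrite fct_sumE.
apply: is_derive_sum => j.
have [H1 H2] := H j.
have := derivableP H1; rewrite H2 => H3.
exact: is_deriveZ.
Qed.

Lemma comp_derive (g : R[i] -> R) (gD : forall a b, g (a + b) = g a + g b)
  (g0 : g 0 = 0) (gM : forall z r, g (z * real_complex R r) = g z * r)
  (Q : 'M[R[i]]_n) (x : R -> 'cV[R]_n) (d : 'cV[R]_n) t i :
  (forall j, derivable (fun u => x u j 0) t 1 /\ 'D_1 (fun u => x u j 0) t = d j 0) ->
  derivable (fun u => g ((Q *m map_mx (real_complex R) (x u)) i 0)) t 1 /\
  'D_1 (fun u => g ((Q *m map_mx (real_complex R) (x u)) i 0)) t =
     g ((Q *m map_mx (real_complex R) d) i 0).
Proof.
move=> H.
have E : forall y : 'cV[R]_n, g ((Q *m map_mx (real_complex R) y) i 0) =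
    \sum_j g (Q i j) * y j 0.
  move=> y; rewrite mxE (big_morph g gD g0); apply: eq_bigr => j _.
  by rewrite mxE gM.
have -> : (fun u => g ((Q *m map_mx (real_complex R) (x u)) i 0)) =
   (fun u => \sum_j g (Q i j) * x u j 0) by apply/funext => u; rewrite E.
rewrite E; have HD := @sum_derive (fun j => g (Q i j)) x d t H.
split; [exact: ex_derive | exact: derive_val].
Qed.
End D.

Theorem theorem3 (R : realType) (n : nat) (A : 'M[R]_n) (J : 'M[R[i]]_n)
  (psi phi : R -> R) (h : R) (s : nat) (alpha theta : nat -> R) :
  jordan_form J -> similar_RC A J ->
  (fun t => psi t - 1) =O_ (at_right (0 : R)) (fun t => t ^+ 2) ->
  (fun t => phi t - t) =O_ (at_right (0 : R)) (fun t => t ^+ 2) ->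
  0 < h -> phi h != 0 -> (2 <= s)%N ->
  forall sc : scheme,
    exact_C h sc J (psi h) (phi h) s alpha theta ->
    exact_R h sc A (psi h) (phi h) s alpha theta.
Proof.
move=> _ [P [Pu HA]] _ _ _ _ _ sc [Huniq Hex].
set rc := real_complex R.
set AC := map_mx rc A in HA.
set Pinv := invmx P.
have PPi : P *m Pinv = 1%:M by rewrite mulmxV.
have PiP : Pinv *m P = 1%:M by rewrite mulVmx.
set stepJ := scheme_rel sc J (rc (psi h)) (rc (phi h)) s
   (fun m => rc (alpha m)) (fun m => rc (theta m)).
set stepAC := scheme_rel sc AC (rc (psi h)) (rc (phi h)) s
   (fun m => rc (alpha m)) (fun m => rc (theta m)).
set stepA := scheme_rel sc A (psi h) (phi h) s alpha theta.
have FA : forall v w, stepA v w <-> stepAC (map_mx rc v) (map_mx rc w).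
  move=> v w; apply: (@rel_transfer _ _ _ rc).
  - exact: map_mxD.
  - exact: map_mx0.
  - exact: map_mxZ.
  - exact: map_mxM.
  - exact: map_mx_inj.
have TMB : forall u : 'cV_n, Pinv *m (AC *m u) = J *m (Pinv *m u).
  by move=> u; rewrite HA -/Pinv !mulmxA PiP mul1mx.
have FB : forall a b, stepAC a b <-> stepJ (Pinv *m a) (Pinv *m b).
  move=> a b; apply: (@rel_transfer _ _ _ idfun (mulmx Pinv)).
  - exact: mulmxDr.
  - exact: mulmx0.
  - by move=> c u; rewrite scalemxAr.
  - exact: TMB.
  - by move=> u1 u2 E; rewrite -[u1]mul1mx -[u2]mul1mx -PPi -!mulmxA E.
have ACc : map_mx conjc AC = AC.
  by apply/matrixP => i j; rewrite !mxE conjc_real.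
have FD : forall a b, stepAC a b -> stepAC (map_mx conjc a) (map_mx conjc b).
  move=> a b; have := (@rel_transfer _ _ _ conjc (map_mx conjc) AC AC).
  move=> /(_ _ _ _ _ _ sc (rc (psi h)) (rc (phi h)) s (fun m => rc (alpha m))
        (fun m => rc (theta m)) a b) [].
  - exact: map_mxD.
  - exact: map_mx0.
  - exact: map_mxZ.
  - by move=> u; rewrite map_mxM ACc.
  - exact: map_mx_inj.
  move=> H _; rewrite /stepAC => /H.
  have cr : forall r, (rc r)^*%C = rc r by move=> r; exact: conjc_real.
  have -> : (fun m => (rc (alpha m))^*%C) = (fun m => rc (alpha m)).
    by apply/funext => m; exact: cr.
  have -> : (fun m => (rc (theta m))^*%C) = (fun m => rc (theta m)).
    by apply/funext => m; exact: cr.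
  have cr2 : forall r, (conjc : {rmorphism R[i] -> R[i]}) (rc r) = rc r by move=> r; exact: conjc_real.
  rewrite (cr2 (psi h)) (cr2 (phi h)); exact: id.
split.
- move=> v.
  have [W [HW Wu]] := Huniq (Pinv *m map_mx rc v).
  have Hb : stepAC (map_mx rc v) (P *m W).
    by apply/FB; rewrite mulmxA PiP mul1mx.
  have Vc : map_mx conjc (map_mx rc v) = map_mx rc v.
    by apply/matrixP => i j; rewrite !mxE conjc_real.
  have bc : map_mx conjc (P *m W) = P *m W.
    have := FD _ _ Hb; rewrite Vc => /FB /Wu E.
    by rewrite [in RHS]E mulmxA PPi mul1mx.
  have bR : P *m W = map_mx rc (map_mx (@complex.Re R) (P *m W)).
    set b := P *m W in bc *; clearbody b.
    apply/matrixP => i j; rewrite !mxE.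
    move/matrixP: bc => /(_ i j); rewrite mxE.
    case: (b i j) => a c [] Hc.
    have c0 : c = 0 by lra.
    by rewrite c0.
  exists (map_mx (@complex.Re R) (P *m W)); split.
    by apply/FA; rewrite -bR.
  move=> w' /FA /FB /Wu E.
  apply: (@map_mx_inj _ _ rc); rewrite -bR [in LHS]E mulmxA PPi mul1mx //.
- move=> x0 x v [Hx0 Hx] Hv0 Hstep k.
  have E : forall t, J *m (Pinv *m map_mx rc (x t)) =
                     Pinv *m map_mx rc (A *m x t).
    by move=> t; rewrite -TMB map_mxM.
  have HS : solves_C J (Pinv *m map_mx rc x0) (fun t => Pinv *m map_mx rc (x t)).
    split; first by rewrite Hx0.
    move=> t i; rewrite E.
    have Hc : forall j, derivable (fun u => x u j 0) t 1 /\
        'D_1 (fun u => x u j 0) t = (A *m x t) j 0 by move=> j; exact: Hx.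
    have ReD : forall a b : R[i], complex.Re (a + b) = complex.Re a + complex.Re b.
      by case=> ? ?; case.
    have ImD : forall a b : R[i], complex.Im (a + b) = complex.Im a + complex.Im b.
      by case=> ? ?; case.
    have ReM : forall (z : R[i]) r, complex.Re (z * rc r) = complex.Re z * r.
      by case=> a b r /=; rewrite mulr0 subr0.
    have ImM : forall (z : R[i]) r, complex.Im (z * rc r) = complex.Im z * r.
      by case=> a b r /=; rewrite mulr0 add0r.
    have [H1 H2] := @comp_derive R n (@complex.Re R) ReD (erefl : complex.Re 0 = 0) ReM Pinv x _ t i Hc.
    have [H3 H4] := @comp_derive R n (@complex.Im R) ImD (erefl : complex.Im 0 = 0) ImM Pinv x _ t i Hc.
    split; [exact: H1|split; [exact: H2|split; [exact: H3|exact: H4]]].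
  have E2 : Pinv *m map_mx rc (v k) = Pinv *m map_mx rc (x (h *+ k)).
    have H0 : (fun k => Pinv *m map_mx rc (v k)) 0%N = Pinv *m map_mx rc x0.
      by rewrite Hv0.
    have H1 : forall k', stepJ (Pinv *m map_mx rc (v k')) (Pinv *m map_mx rc (v k'.+1)).
      move=> k'; apply: (proj1 (FB _ _)); apply: (proj1 (FA _ _)).
      exact: (Hstep k').
    exact: (Hex _ _ (fun k => Pinv *m map_mx rc (v k)) HS H0 H1 k).
  apply: (@map_mx_inj _ _ rc).
  by rewrite -[map_mx rc (v k)]mul1mx -PPi -mulmxA E2 mulmxA PPi mul1mx.
Qed.
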